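(* Let $m_1,m_2$ be positive real numbers with $m_1\leq 1.8m_2$. If $G\in\mathcal{G}_{m_1,m_2}$, then the disjoint union $G\cup K_t$ belongs to $\mathcal{G}_{m_1,m_2}$ for every integer $1\leq t\leq\lfloor 2m_1\rfloor$.
   Context: All graphs are finite and simple. For a graph $H$, $|H|$ denotes its number of vertices and $\lVert H\rVert$ its number of edges. For real numbers $m_1,m_2$, $\mathcal{G}_{m_1,m_2}$ is the class of graphs $G$ such that $\lVert H\rVert\leq m_1|H|$ for every subgraph $H$ of $G$, and $\lVert H\rVert\leq m_2|H|$ for every bipartite subgraph $H$ of $G$. $G\cup K_t$ denotes the vertex-disjoint union of $G$ and the complete graph on $t$ vertices. *)

(* Defs.v *)
From HB Require Import structures.
From mathcomp Require Import all_boot all_order all_algebra.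
From mathcomp Require Import reals.
Set Implicit Arguments. Unset Strict Implicit. Unset Printing Implicit Defensive.
Import Order.TTheory GRing.Theory Num.Theory.
Local Open Scope ring_scope.

Definition simple_graph (T : finType) (e : rel T) : Prop :=
  symmetric e /\ irreflexive e.

Definition edges (T : finType) (e : rel T) : {set {set T}} :=
  [set [set p.1; p.2] | p in [set q : T * T | e q.1 q.2]].

(* H = (S, F) is a subgraph of (T, e): F is a set of edges of the graph,
   each with both endpoints in S. |H| = #|S|, ||H|| = #|F|. *)
Definition is_subgraph (T : finType) (e : rel T) (S : {set T}) (F : {set {set T}}) :=
  (F \subset edges e) && [forall f in F, f \subset S].

Definition is_bipartite (T : finType) (S : {set T}) (F : {set {set T}}) :=
  [exists A : {set T}, (A \subset S) && [forall f in F, #|f :&: A| == 1%N]].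

Definition in_class (R : realType) (m1 m2 : R) (T : finType) (e : rel T) : Prop :=
  forall (S : {set T}) (F : {set {set T}}), is_subgraph e S F ->
    (#|F|%:R <= m1 * #|S|%:R) /\
    (is_bipartite S F -> #|F|%:R <= m2 * #|S|%:R).

Definition union_K (T : finType) (e : rel T) (t : nat) : rel (T + 'I_t)%type :=
  fun u v => match u, v with
             | inl x, inl y => e x y
             | inr i, inr j => i != j
             | _, _ => false
             end.
Arguments union_K {T} e t.

(* Main.v *)
Require Import Defs.
From HB Require Import structures.
From mathcomp Require Import all_boot all_order all_algebra.
From mathcomp Require Import reals.
From mathcomp Require Import ring lra zify.
Import Order.TTheory GRing.Theory Num.Theory.
Local Open Scope ring_scope.

Definition isl {A B : Type} (u : A + B) : bool := if u is inl _ then true else false.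

Section Aux.
Variables (T : finType) (t : nat) (e : rel T).
Local Notation X := (T + 'I_t)%type.
Local Notation L := [set u : X | isl u].

Lemma edge_inv (Y : finType) (E : rel Y) f : f \in edges E ->
  exists p : Y * Y, E p.1 p.2 /\ f = [set p.1; p.2].
Proof. by move/imsetP=> [p]; rewrite inE => Hp ->; exists p. Qed.

Lemma card_pre (Z : {set X}) : Z \subset L -> #|inl @^-1: Z| = #|Z|.
Proof.
move=> ZL; rewrite -(card_imset (inl @^-1: Z) (@inl_inj T 'I_t)).
apply: eq_card=> u; apply/imsetP/idP.
  by move=> [x]; rewrite inE => H ->.
move=> uZ; move/subsetP: ZL => /(_ u uZ); rewrite inE.
by case: u uZ => // x xZ _; exists x; rewrite ?inE.
Qed.

Lemma pre_inj : {in [set f : {set X} | f \subset L] &, injective (fun f : {set X} => (inl @^-1: f : {set T}))}.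
Proof.
move=> f g; rewrite !inE => /subsetP fL /subsetP gL eq.
apply/setP=> u; apply/idP/idP => H.
  have := fL u H; rewrite inE; case: u H => // x H _.
  have : x \in inl @^-1: f by rewrite inE.
  by rewrite eq inE.
have := gL u H; rewrite inE; case: u H => // x H _.
have : x \in inl @^-1: g by rewrite inE.
by rewrite -eq inE.
Qed.

Lemma edgeL f : f \in edges (union_K e t) -> f \subset L ->
  inl @^-1: f \in edges e.
Proof.
move=> /edge_inv [[[x|i] [y|j]] [/= H ->]] // sub.
- apply/imsetP; exists (x, y); rewrite ?inE //.
  by apply/setP=> z; rewrite !inE.
- by move/subsetP: sub => /(_ (inr i)); rewrite !inE eqxx /= => /(_ isT).
Qed.

Lemma edgeR f : f \in edges (union_K e t) -> ~~ (f \subset L) ->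
  (f \subset ~: L) /\ #|f| = 2%N.
Proof.
move=> /edge_inv [[[x|i] [y|j]] [/= H ->]] // sub.
- by case/negP: sub; apply/subsetP=> u; rewrite !inE => /orP[]/eqP->.
- split; first by apply/subsetP=> u; rewrite !inE => /orP[]/eqP->.
  by rewrite cards2 /= H.
Qed.

End Aux.

Theorem lemma3 (R : realType) (m1 m2 : R) (T : finType) (e : rel T) :
  0 < m1 -> 0 < m2 -> m1 <= 18 / 10 * m2 ->
  simple_graph e -> in_class m1 m2 e ->
  forall t : nat, (1 <= t)%N -> (t%:Z <= Num.floor (2 * m1))%R ->
    in_class m1 m2 (union_K e t).
Proof.
move=> m1p m2p hm _ HG t t1 tfl S F /andP[FE /forall_inP FS].
have tR : t%:R <= 2 * m1.
  apply: le_trans (floor_le _); by rewrite pmulrn ler_int.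
set L := [set u : (T + 'I_t)%type | isl u].
set F1 := F :&: [set f : {set (T + 'I_t)%type} | f \subset L].
set F2 := F :\: [set f : {set (T + 'I_t)%type} | f \subset L].
set S1 := S :&: L. set S2 := S :\: L.
set S' := inl @^-1: S. set F' := [set (inl @^-1: f : {set T}) | f : {set (T + 'I_t)%type} in F1].
have hF : #|F| = (#|F1| + #|F2|)%N by rewrite cardsID.
have hS : #|S| = (#|S1| + #|S2|)%N by rewrite cardsID.
have hS' : #|S'| = #|S1|.
  by rewrite -card_pre ?subsetIr // /S' /S1 preimsetI; apply: eq_card=> u; rewrite !inE andbT.
have hF' : #|F'| = #|F1|.
  have sub : {subset F1 <= [set f : {set (T + 'I_t)%type} | f \subset L]}.
    by move=> f; rewrite inE => /andP[].
  rewrite card_in_imset // => f g /sub fF /sub gF; exact: pre_inj.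
have subG : is_subgraph e S' F'.
  apply/andP; split.
    apply/subsetP=> f' /imsetP [f]; rewrite !inE => /andP[fF fL] ->.
    by apply: edgeL => //; apply: (subsetP FE).
  apply/forall_inP=> f' /imsetP [f]; rewrite !inE => /andP[fF fL] ->.
  by apply: preimsetS; apply: FS.
have F2R : forall f, f \in F2 -> (f \subset S2) /\ #|f| = 2%N.
  move=> f; rewrite !inE => /andP[nL fF].
  have [HR H2] := @edgeR _ _ _ _ (subsetP FE f fF) nL.
  split=> //; rewrite /S2 setDE subsetI FS //.
have hS2 : (#|S2| <= t)%N.
  apply: (@leq_trans #|[set (inr i : (T + 'I_t)%type) | i : 'I_t]|).
    2: by rewrite card_imset ?card_ord //; exact: inr_inj.
  apply: subset_leq_card; apply/subsetP=> u; rewrite !inE => /andP[].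
  by case: u => // i _ _; apply: imset_f.
have [G1 G2] := HG S' F' subG.
split.
  have hF2 : (#|F2| <= 'C(#|S2|, 2))%N.
    rewrite -cards_draws; apply: subset_leq_card; apply/subsetP=> f fF2.
    by have [? ?] := F2R f fF2; rewrite inE; apply/andP; split => //; apply/eqP.
  have h2 : (2 * #|F2| <= #|S2| * (#|S2|).-1)%N.
    move: hF2; rewrite bin2 => h.
    have := odd_double_half (#|S2| * (#|S2|).-1); rewrite -muln2; lia.
  rewrite hF hS natrD natrD -hF' -hS' mulrDr.
  suff : #|F2|%:R <= m1 * #|S2|%:R by move: G1; lra.
  move: h2 hS2; case: #|S2| => [|s] /=.
    by rewrite muln0 leqn0 muln_eq0 /= => /eqP ->; rewrite mulr0.
  move=> h2 hs.
  have : (2 * #|F2|)%:R <= (s.+1 * s)%:R :> R by rewrite ler_nat.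
  have : s.+1%:R <= t%:R :> R by rewrite ler_nat.
  rewrite natrM natrM -addn1 natrD; move: tR m1p.
  set a := #|F2|%:R; set b := s%:R.
  have : 0 <= b by rewrite ler0n.
  move=> *; nra.
move=> /existsP [A /andP[AS /forall_inP AF]].
have bip : is_bipartite S' F'.
  apply/existsP; exists (inl @^-1: A); rewrite preimsetS //=.
  apply/forall_inP=> f' /imsetP [f]; rewrite !inE => /andP[fF fL] ->.
  rewrite -preimsetI card_pre ?AF //.
  by apply: subset_trans fL; apply: subsetIl.
have G2' := G2 bip.
set a := #|S2 :&: A|. set b := #|S2 :\: A|.
have hab : (a + b)%N = #|S2| by rewrite cardsID.
have hF2 : (#|F2| <= a * b)%N.
  pose P := [set B : {set (T + 'I_t)%type} | B \subset S2 :&: A & #|B| == 1%N].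
  pose Q := [set B : {set (T + 'I_t)%type} | B \subset S2 :\: A & #|B| == 1%N].
  have -> : (a * b = #|setX P Q|)%N by rewrite cardsX !cards_draws !bin1.
  rewrite -(@card_in_imset _ _ (fun f => (f :&: A, f :\: A)) F2).
    apply: subset_leq_card; apply/subsetP=> p /imsetP [f fF2 ->].
    have [fS2 f2] := F2R f fF2.
    have fA : f \in F by move: fF2; rewrite inE => /andP[].
    have h1 := eqP (AF f fA).
    rewrite !inE h1 cardsD h1 f2 !eqxx !andbT.
    by rewrite setSI ?setSD.
  move=> f g _ _ [h1 h2].
  by rewrite -(setID f A) -(setID g A) h1 h2.
rewrite hF hS natrD natrD -hF' -hS' mulrDr.
suff : #|F2|%:R <= m2 * #|S2|%:R by move: G2'; lra.
have : #|F2|%:R <= (a * b)%:R :> R by rewrite ler_nat.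
have : #|S2|%:R <= t%:R :> R by rewrite ler_nat.
rewrite -hab natrM natrD; move: tR m1p m2p hm.
set x := a%:R; set y := b%:R.
have : 0 <= x by rewrite ler0n.
have : 0 <= y by rewrite ler0n.
move=> hx hy *.
have : 4 * (x * y) <= (x + y) * (x + y).
  rewrite -subr_ge0; have -> : (x + y) * (x + y) - 4 * (x * y) = (x - y) ^+ 2 by ring.
  exact: sqr_ge0.
have : (x + y) * (x + y) <= (x + y) * (36 / 10 * m2).
  by apply: ler_wpM2l; lra.
have : 0 <= m2 * (x + y) by apply: mulr_ge0; lra.
nra.
Qed.
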